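(* Let $(\mathcal{G},c)$ be a colored directed acyclic graph with compatible coloring, and assume that $c(i)=c(j)$ implies $(\mathcal{G}_i,c)\cong(\mathcal{G}_j,c)$ for all vertices $i,j$. Then there is no directed edge $j\to i$ with $c(i)=c(j)$.
   Context: $\mathcal{G}=(V,\vec E)$ is a finite DAG; $j\to i$ means $(j,i)\in\vec E$. A coloring is $c:V\cup\vec E\to[r+R]$; compatible means $c(V)\cap c(\vec E)=\emptyset$ and $c(j\to i)=c(l\to k)$ implies $c(i)=c(k)$. $\mathrm{ch}(i)=\{k:i\to k\}$; $(\mathcal{G}_i,c)$ is the colored graph on $\{i\}\cup\mathrm{ch}(i)$ with edges $i\to k$, $k\in\mathrm{ch}(i)$, and colors inherited from $c$; $\cong$ is isomorphism of colored graphs. *)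

(* Defs.v *)
From mathcomp Require Import all_boot.
Set Implicit Arguments. Unset Strict Implicit. Unset Printing Implicit Defensive.

(* A finite directed graph on the finite vertex type V: E j i means j -> i. *)

Definition acyclic (V : finType) (E : rel V) : Prop :=
  forall (x : V) (p : seq V), path E x p -> last x p = x -> p = [::].

(* A coloring c : V ∪ E -> [r+R] is given by a vertex part cv and an edge
   part ce (ce j i is the color of the edge j -> i; only meaningful if E j i). *)
Definition compatible (V : finType) (E : rel V) (K : nat)
    (cv : V -> 'I_K) (ce : V -> V -> 'I_K) : Prop :=
  (forall (v j i : V), E j i -> cv v <> ce j i) /\
  (forall (j i l k : V), E j i -> E l k -> ce j i = ce l k -> cv i = cv k).

Definition loc_vert (V : finType) (E : rel V) (i : V) : {set V} :=
  i |: [set k | E i k].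

Definition loc_edge (V : finType) (E : rel V) (i : V) (x y : V) : bool :=
  (x == i) && E i y.

Definition loc_iso (V : finType) (E : rel V) (K : nat)
    (cv : V -> 'I_K) (ce : V -> V -> 'I_K) (i j : V) : Prop :=
  exists f : V -> V,
    [/\ {in loc_vert E i &, injective f},
        f @: loc_vert E i = loc_vert E j,
        {in loc_vert E i &, forall x y,
            loc_edge E j (f x) (f y) = loc_edge E i x y},
        {in loc_vert E i, forall x, cv (f x) = cv x} &
        {in loc_vert E i &, forall x y,
            loc_edge E i x y -> ce (f x) (f y) = ce x y}].

(* Main.v *)
Require Import Defs.
From mathcomp Require Import all_boot.

Theorem lemma7p13 (V : finType) (E : rel V) (r R : nat)
    (cv : V -> 'I_(r + R)) (ce : V -> V -> 'I_(r + R)) :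
  acyclic E ->
  compatible E cv ce ->
  (forall i j : V, cv i = cv j -> loc_iso E cv ce i j) ->
  forall i j : V, E j i -> cv i <> cv j.
Proof.
move=> Hac _ Hiso.
pose P x := exists y, E y x /\ cv y = cv x.
have step : forall x, P x -> exists k, E x k /\ P k.
  move=> x [y [Eyx cyx]].
  have [f [_ _ He Hc _]] := Hiso y x cyx.
  have yin : y \in loc_vert E y by rewrite /loc_vert setU11.
  have xin : x \in loc_vert E y by rewrite /loc_vert in_setU1 inE Eyx orbT.
  have := He y x yin xin; rewrite /loc_edge eqxx Eyx /= => /andP [/eqP fy Exf].
  exists (f x); split => //; exists x; split => //.
  by rewrite (Hc x xin).
pose Rs x := [set y | connect E x y].
have key : forall n x, #|Rs x| <= n -> ~ P x.
  elim=> [|n IH] x Hn Px.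
    have xin : x \in Rs x by rewrite inE connect0.
    have : 0 < #|Rs x| by apply/card_gt0P; exists x.
    by rewrite lt0n -leqn0 Hn.
  have [k [Exk Pk]] := step x Px.
  apply: (IH k _ Pk).
  have sub : Rs k \proper Rs x.
    apply/properP; split.
      apply/subsetP => z; rewrite !inE => Hkz.
      exact: connect_trans (connect1 Exk) Hkz.
    exists x; first by rewrite inE connect0.
    rewrite inE; apply/negP => /connectP [p pth lst].
    have := Hac x (k :: p); rewrite /= Exk pth /= => H.
    by have := H isT (esym lst).
  by rewrite -ltnS (leq_trans (proper_card sub) Hn).
move=> i j Eji cij.
by apply: (key _ i (leqnn _)); exists j; split.
Qed.
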